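(* Let $\mathbf{H}\in\mathbb{R}^{n\times m}$ be a random matrix (of arbitrary distribution not depending on $\rho$), $\mathbf{v}\sim\mathcal{N}(\mathbf{0},\rho^{-1}\mathbf{I}_n)$ independent of $\mathbf{H}$, $\mathbf{y}=\mathbf{H}\mathbf{e}+\mathbf{v}$, and let $\tau$ be as defined in the context (a function of $\mathbf{H}$ only). Let $d\in[0,\infty)$. If $\Pr(\tau\le\rho^{-1})\ \dot\le\ \rho^{-d}$, then $\Pr(\hat{\mathbf{s}}_{\mathrm{SDR}}\neq\mathbf{e})\ \dot\le\ \rho^{-d}$.
   Context: $\mathbf{e}$ is the all-ones vector. $\mathcal{X}=\{\mathbf{X}\in\mathbb{S}^{m+1}:\mathrm{diag}(\mathbf{X})=\mathbf{e},\mathbf{X}\succeq\mathbf{0}\}$, $\mathbf{M}=[\mathbf{I}_m\ -\mathbf{e}]$, $\mathcal{H}=\{\mathbf{X}\in\mathbb{S}^{m+1}:\mathrm{Tr}(\mathbf{M}\mathbf{X}\mathbf{M}^T)=1\}$, $\mathbf{L}_0=\mathbf{M}^T\mathbf{H}^T\mathbf{H}\mathbf{M}$, $\tau=\min_{\mathbf{X}\in\mathcal{X}\cap\mathcal{H}}\mathrm{Tr}(\mathbf{L}_0\mathbf{X})$. The SDR estimate: with $\mathbf{L}=\begin{bmatrix}\mathbf{H}^T\mathbf{H}&-\mathbf{H}^T\mathbf{y}\\-\mathbf{y}^T\mathbf{H}&\mathbf{y}^T\mathbf{y}\end{bmatrix}$ and $\mathbf{X}^\star$ an optimal point (fixed selection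 rule) of $\min_{\mathbf{X}\in\mathcal{X}}\mathrm{Tr}(\mathbf{L}\mathbf{X})$, $[\hat{\mathbf{s}}_{\mathrm{SDR}}]_i=\mathrm{sgn}([\mathbf{X}^\star]_{i,m+1})$ ($\mathrm{sgn}(x)=1$ if $x>0$, $-1$ otherwise). Notation: $f(\rho)\ \dot\le\ \rho^{-d}$ means $\limsup_{\rho\to\infty}\ln f(\rho)/\ln\rho\le -d$. *)

(* Defs.v *)
From HB Require Import structures.
From mathcomp Require Import all_boot all_order all_algebra.
From mathcomp Require Import all_classical all_reals all_analysis.
Set Implicit Arguments. Unset Strict Implicit. Unset Printing Implicit Defensive.
Import Order.TTheory GRing.Theory Num.Theory.
Import numFieldNormedType.Exports.
Local Open Scope classical_set_scope.
Local Open Scope ring_scope.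

Section SDR.
Context {R : realType}.

Definition ones (k : nat) : 'cV[R]_k := const_mx 1.

Definition psd (k : nat) (X : 'M[R]_k) : Prop :=
  X^T = X /\ forall x : 'cV[R]_k, 0 <= (x^T *m X *m x) 0 0.

Definition calX (m : nat) : set 'M[R]_(m + 1) :=
  [set X | psd X /\ forall i, X i i = 1].
Arguments calX : clear implicits.

Definition Mmat (m : nat) : 'M[R]_(m, m + 1) := row_mx 1%:M (- ones m).

Definition calH (m : nat) : set 'M[R]_(m + 1) :=
  [set X | \tr (Mmat m *m X *m (Mmat m)^T) = 1].
Arguments calH : clear implicits.

Definition L0 (n m : nat) (H : 'M[R]_(n, m)) : 'M[R]_(m + 1) :=
  (Mmat m)^T *m H^T *m H *m Mmat m.

(* tau = min_{X in cal_X cap cal_H} Tr(L_0 X)  (the minimum is attained,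
   so it is the infimum) *)
Definition tau (n m : nat) (H : 'M[R]_(n, m)) : R :=
  inf [set \tr (L0 H *m X) | X in calX m `&` calH m].

Definition Lmat (n m : nat) (H : 'M[R]_(n, m)) (y : 'cV[R]_n) : 'M[R]_(m + 1) :=
  block_mx (H^T *m H) (- (H^T *m y)) (- (y^T *m H)) (y^T *m y).

Definition optimal_selection (m : nat) (sel : 'M[R]_(m + 1) -> 'M[R]_(m + 1)) : Prop :=
  forall L : 'M[R]_(m + 1),
    calX m (sel L) /\ forall X, calX m X -> \tr (L *m sel L) <= \tr (L *m X).

Definition sgn (x : R) : R := if 0 < x then 1 else -1.

Definition s_SDR (n m : nat) (sel : 'M[R]_(m + 1) -> 'M[R]_(m + 1))
  (H : 'M[R]_(n, m)) (y : 'cV[R]_n) : 'cV[R]_m :=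
  \col_(i < m) sgn (sel (Lmat H y) (lshift 1 i) (rshift m ord0)).

Definition eln (x : \bar R) : \bar R :=
  match x with
  | r%:E => if (0 < r)%R then (ln r)%:E else -oo
  | +oo => +oo
  | -oo => -oo
  end%E.

(* f(rho) \dot<= rho^{-d}  :<=>  limsup_{rho -> oo} ln f(rho) / ln rho <= -d *)
Definition dot_le (f : R -> \bar R) (d : R) : Prop :=
  (limf_esup (fun rho : R => eln (f rho) * ((ln rho)^-1)%:E) (pinfty_nbhs R)
     <= (- d)%:E)%E.

End SDR.

(* Noise model: for the given rho, the joint law of (H, v) is
   law(H) (x) N(0, rho^{-1} I_n), i.e. v is independent of H and has i.i.d.
   N(0, rho^{-1}) entries; stated on measurable rectangles (which generate
   the product sigma-algebra). normal_prob takes the standard deviation. *)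
Definition gauss_noise_indep {R : realType} {d : measure_display}
  {Omega : measurableType d} (P : probability Omega R) (n m : nat)
  (H : Omega -> 'M[R]_(n, m)) (v : Omega -> 'cV[R]_n) (rho : R) : Prop :=
  forall (A : 'I_n -> 'I_m -> set R) (B : 'I_n -> set R),
    (forall i j, measurable (A i j)) -> (forall i, measurable (B i)) ->
    P [set w | (forall i j, A i j (H w i j)) /\ (forall i, B i (v w i 0))] =
    (P [set w | forall i j, A i j (H w i j)] *
     \prod_(i < n) normal_prob 0 (Num.sqrt (rho^-1)) (B i))%E.

(* Main.v *)
Require Import Defs.
From HB Require Import structures.
From mathcomp Require Import all_boot all_order all_algebra.
From mathcomp Require Import all_classical all_reals all_analysis.
From mathcomp Require Import ring lra measurable_realfun.
Set Implicit Arguments. Unset Strict Implicit. Unset Printing Implicit Defensive.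
Import Order.TTheory GRing.Theory Num.Theory.
Import numFieldNormedType.Exports.
Local Open Scope classical_set_scope.
Local Open Scope ring_scope.

Section Det.
Variable R : realType.

Lemma tr_rows p k (B : 'M[R]_(p,k)) (X : 'M[R]_k) :
  \tr (B *m X *m B^T) = \sum_j (row j B *m X *m (row j B)^T) 0 0.
Proof.
rewrite /mxtrace; apply: eq_bigr => j _.
rewrite !mxE; apply: eq_bigr => l _; by rewrite -row_mul !mxE.
Qed.

Lemma qf_ge0 k (X : 'M[R]_k) (r : 'rV[R]_k) : psd X -> 0 <= (r *m X *m r^T) 0 0.
Proof. by move=> [_ H]; have := H r^T; rewrite trmxK. Qed.

Lemma Q_ge0 p k (B : 'M[R]_(p,k)) (X : 'M[R]_k) : psd X -> 0 <= \tr (B *m X *m B^T).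
Proof. by move=> hX; rewrite tr_rows; apply: sumr_ge0 => j _; exact: qf_ge0. Qed.

Lemma Q_par p k (B1 B2 : 'M[R]_(p,k)) (X : 'M[R]_k) :
  \tr ((B1 + B2) *m X *m (B1 + B2)^T) + \tr ((B1 - B2) *m X *m (B1 - B2)^T)
  = 2 * \tr (B1 *m X *m B1^T) + 2 * \tr (B2 *m X *m B2^T).
Proof.
have tD : (B1 + B2)^T = B1^T + B2^T by apply/matrixP => i j; rewrite !mxE.
have tB : (B1 - B2)^T = B1^T - B2^T by apply/matrixP => i j; rewrite !mxE.
rewrite tD tB !mulmxDl ?mulmxBl !mulmxDr ?mulmxBr ?mulmxN ?mulNmx !mxtraceD ?mxtraceN ?mxtraceB.
rewrite !raddfN opprK.
ring.
Qed.

Lemma ones_split m : ones (m + 1) = col_mx (ones m) (ones 1) :> 'cV[R]_(m + 1).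
Proof.
apply/matrixP => i j; case: (split_ordP i) => k ->;
by rewrite ?col_mxEu ?col_mxEd !mxE.
Qed.

Lemma qf_delta k (X : 'M[R]_k) (a b : 'I_k) :
  (delta_mx (0:'I_1) a *m X *m (delta_mx (0:'I_1) b)^T) 0 0 = X a b.
Proof. by rewrite -rowE trmx_delta -colE !mxE. Qed.

Lemma qf_lin k (X : 'M[R]_k) (r s : 'rV[R]_k) (a b : R) :
  ((a *: r + b *: s) *m X *m (a *: r + b *: s)^T) 0 0 =
  a ^+ 2 * (r *m X *m r^T) 0 0 + a * b * (r *m X *m s^T) 0 0
  + a * b * (s *m X *m r^T) 0 0 + b ^+ 2 * (s *m X *m s^T) 0 0.
Proof.
have tD : (a *: r + b *: s)^T = a *: r^T + b *: s^T by apply/matrixP => i j; rewrite !mxE.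
rewrite tD !mulmxDl !mulmxDr -!scalemxAl -!scalemxAr.
move: (r *m X *m r^T) (r *m X *m s^T) (s *m X *m r^T) (s *m X *m s^T) => P1 P2 P3 P4.
rewrite !mxE; ring.
Qed.

Lemma Q_lin p k (B : 'M[R]_(p,k)) (X Y : 'M[R]_k) a b :
  \tr (B *m (a *: X + b *: Y) *m B^T) = a * \tr (B *m X *m B^T) + b * \tr (B *m Y *m B^T).
Proof.
by rewrite mulmxDr mulmxDl -!scalemxAr -!scalemxAl !linearD !linearZ.
Qed.

Lemma tr_uut n (u : 'cV[R]_n) : \tr (u *m u^T) = \sum_i u i 0 ^+ 2.
Proof.
rewrite /mxtrace; apply: eq_bigr => i _; rewrite !mxE big_ord1 !mxE; ring.
Qed.

Section Det2.
Variables (m n : nat).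
Definition lst : 'I_(m + 1) := rshift m (0 : 'I_1).
Definition Jm : 'M[R]_(m + 1) := ones (m + 1) *m (ones (m + 1))^T.

Lemma lshift_lst j : (lshift 1 j == lst) = false.
Proof. apply/negbTE; rewrite -val_eqE /= addn0; have := ltn_ord j; by case: eqP => // ->; rewrite ltnn. Qed.

Lemma Mmat_row j : row j (Mmat m) = delta_mx 0 (lshift 1 j) - delta_mx 0 lst :> 'rV[R]_(m + 1).
Proof.
apply/rowP => k; rewrite /Mmat.
case: (split_ordP k) => k' ->.
  rewrite [LHS]mxE row_mxEl !mxE lshift_lst /= subr0.
  by rewrite (inj_eq (@lshift_inj _ _)) eq_sym.
rewrite [LHS]mxE row_mxEr !mxE (ord1 k') eqxx /=.
have -> : (rshift m (0 : 'I_1) == lshift 1 j) = false.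
  by apply/negbTE; rewrite eq_sym lshift_lst.
by rewrite /lst eqxx sub0r.
Qed.

Lemma B2_row (v : 'cV[R]_n) j :
  row j (row_mx (0 : 'M[R]_(n, m)) v) = v j 0 *: delta_mx 0 lst.
Proof.
apply/rowP => k; case: (split_ordP k) => k' ->.
  by rewrite [LHS]mxE row_mxEl !mxE lshift_lst mulr0.
rewrite [LHS]mxE row_mxEr !mxE (ord1 k') /lst eqxx.
by rewrite eqxx mulr1.

Qed.

Lemma Mmat_ones : Mmat m *m ones (m + 1) = 0 :> 'cV[R]_m.
Proof.
rewrite ones_split /Mmat mul_row_col mul1mx; apply/matrixP => i j.
by rewrite !mxE big_ord1 !mxE mulr1 subrr.
Qed.

Lemma HM_eq (H : 'M[R]_(n, m)) : H *m Mmat m = row_mx H (- (H *m ones m)).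
Proof. by rewrite /Mmat mul_mx_row mulmx1 mulmxN. Qed.

Lemma Lmat_tr (H : 'M[R]_(n, m)) y X :
  \tr (Lmat H y *m X) = \tr (row_mx H (-y) *m X *m (row_mx H (-y))^T).
Proof.
have -> : Lmat H y = (row_mx H (-y))^T *m row_mx H (-y).
  rewrite tr_row_mx mul_col_row /Lmat.
  have -> : (- y)^T = - y^T by apply/matrixP => i j; rewrite !mxE.
  by rewrite mulmxN mulNmx mulNmx mulmxN opprK.
by rewrite (mxtrace_mulC (row_mx H (-y) *m X)) !mulmxA.
Qed.

Lemma L0_tr (H : 'M[R]_(n, m)) X :
  \tr (L0 H *m X) = \tr ((H *m Mmat m) *m X *m (H *m Mmat m)^T).
Proof. by rewrite /L0 trmx_mul (mxtrace_mulC (H *m Mmat m *m X)) !mulmxA. Qed.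

Lemma J_calX : calX Jm.
Proof.
split; [split|].
- by rewrite /Jm trmx_mul trmxK.
- move=> x.
  have -> : x^T *m Jm *m x = (x^T *m ones _) *m (x^T *m ones _)^T.
    by rewrite trmx_mul trmxK /Jm !mulmxA.
  move: (x^T *m ones (m + 1)) => u.
  by rewrite mxE big_ord1 mxE -expr2 sqr_ge0.
- by move=> i; rewrite !mxE big_ord1 !mxE mulr1.
Qed.

Lemma Q_J p (B : 'M[R]_(p, m + 1)) :
  \tr (B *m Jm *m B^T) = \sum_j (B *m ones _) j 0 ^+ 2.
Proof.
have -> : B *m Jm *m B^T = (B *m ones _) *m (B *m ones _)^T.
  by rewrite trmx_mul /Jm !mulmxA.
by rewrite tr_uut.
Qed.

Lemma Q_B2 (v : 'cV[R]_n) (X : 'M[R]_(m + 1)) :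
  \tr (row_mx (0 : 'M[R]_(n, m)) v *m X *m (row_mx (0 : 'M[R]_(n, m)) v)^T)
  = X lst lst * \sum_j v j 0 ^+ 2.
Proof.
rewrite tr_rows mulr_sumr; apply: eq_bigr => j _.
rewrite B2_row.
have -> : (v j 0 *: delta_mx 0 lst)^T = v j 0 *: (delta_mx (0 : 'I_1) lst)^T :> 'cV[R]_(m+1).
  by apply/matrixP => a b; rewrite !mxE.
rewrite -!scalemxAl -!scalemxAr.
rewrite -(qf_delta X lst lst) !mxE; ring.
Qed.

Lemma ones1 : ones 1 = 1%:M :> 'M[R]_1.
Proof. by apply/matrixP => i j; rewrite (ord1 i) (ord1 j) !mxE. Qed.

Lemma A_ones (H : 'M[R]_(n, m)) (v : 'cV[R]_n) :
  row_mx H (- (H *m ones m + v)) *m ones (m + 1) = - v.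
Proof.
by rewrite ones_split mul_row_col ones1 mulmx1 opprD addrA subrr add0r.
Qed.

Lemma det_main (H : 'M[R]_(n, m)) (v : 'cV[R]_n) sel :
  optimal_selection sel ->
  s_SDR sel H (H *m ones m + v) != ones m ->
  tau H <= 2 * \sum_j v j 0 ^+ 2.
Proof.
move=> hsel herr.
set y := H *m ones m + v.
set X := sel (Lmat H y).
set s2 := \sum_j v j 0 ^+ 2.
have s2ge0 : 0 <= s2 by apply: sumr_ge0 => j _; exact: sqr_ge0.
have [[hXs hXd] hopt] := hsel (Lmat H y).
have [i0 hi0] : exists i0 : 'I_m, ~ (0 < X (lshift 1 i0) lst).
  apply/existsNP => hall; move/negP: herr; apply; apply/eqP/matrixP => i j.
  rewrite !mxE /sgn; case: ifP => // /negP; case; exact: hall i.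
set A := row_mx H (- y).
set HM := H *m Mmat m.
set B2 := row_mx (0 : 'M[R]_(n, m)) v.
have hA : A + B2 = HM.
  by rewrite /A /B2 /HM HM_eq add_row_mx addr0 /y opprD addrNK.
have hLX := hopt Jm J_calX.
rewrite !Lmat_tr -/A Q_J A_ones in hLX.
have hQA : \tr (A *m X *m A^T) <= s2.
  apply: (le_trans hLX); rewrite /s2 le_eqVlt; apply/orP; left; apply/eqP; apply: eq_bigr => j _.
  by rewrite mxE sqrrN.
have hQB2 : \tr (B2 *m X *m B2^T) = s2 by rewrite /B2 Q_B2 hXd mul1r.
have hQHM : \tr (HM *m X *m HM^T) <= 4 * s2.
  have := Q_par A B2 X; rewrite hA.
  have := Q_ge0 (A - B2) hXs; lra.
have hQHM0 : 0 <= \tr (HM *m X *m HM^T) by exact: Q_ge0.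
set t := \tr (Mmat m *m X *m (Mmat m)^T).
have ht : 2 <= t.
  rewrite /t tr_rows (bigD1 i0) //=.
  have -> : row i0 (Mmat m) = 1 *: delta_mx 0 (lshift 1 i0) + (-1) *: delta_mx 0 lst :> 'rV[R]_(m + 1).
    by rewrite Mmat_row scale1r scaleN1r.
  rewrite qf_lin !qf_delta !hXd.
  have hsym : X lst (lshift 1 i0) = X (lshift 1 i0) lst.
    have hXT : X^T = X := proj1 hXs.
    by rewrite -{1}hXT mxE.
  rewrite hsym.
  have : 0 <= \sum_(j < m | j != i0) (row j (Mmat m) *m X *m (row j (Mmat m))^T) 0 0.
    by apply: sumr_ge0 => j _; exact: qf_ge0.
  move/negP: hi0; rewrite -leNgt => hi0'.
  lra.
set lam := t^-1.
have tgt0 : 0 < t by lra.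
have hlam : lam * t = 1 by rewrite /lam mulVf // gt_eqF.
have lam0 : 0 < lam by rewrite /lam invr_gt0.
have lam2 : lam <= 1/2 by nra.
set Xl := (1 - lam) *: Jm + lam *: X.
have [[hJs hJq] hJd] := J_calX.
have hXl : calX Xl.
  split; [split|].
  - by rewrite /Xl linearD !linearZ /= hJs (proj1 hXs).
  - move=> x; rewrite /Xl mulmxDr mulmxDl -!scalemxAr -!scalemxAl.
    have := hJq x; have := (proj2 hXs) x; rewrite -/X.
    move: (x^T *m Jm *m x) (x^T *m X *m x) => a b hb ha.
    rewrite !mxE.
    nra.
  - move=> i; rewrite /Xl; have := hJd i; have := hXd i; rewrite -/X.
    move: (Jm) (X) => J0 X0 h1 h2.
    by rewrite !mxE h1 h2; ring.
have hMe : Mmat m *m ones (m + 1) = 0 := Mmat_ones.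
have hXlH : calH Xl.
  rewrite /calH /= Q_lin -/t Q_J hMe.
  rewrite big1 ?mulr0 ?add0r //; last by move=> j _; rewrite mxE expr0n.
have hlb : has_lbound [set \tr (L0 H *m X0) | X0 in @calX R m `&` @calH R m].
  exists 0 => z [X0 [[hX0s _] _] <-]; rewrite L0_tr; exact: Q_ge0.
have := ge_inf hlb; rewrite -/(tau H) => htau.
have := htau (\tr (L0 H *m Xl)) (ex_intro2 _ _ Xl (conj hXl hXlH) erefl).
rewrite L0_tr Q_lin Q_J -/HM.
rewrite big1 ?mulr0 ?add0r; last first.
  by move=> j _; rewrite /HM -mulmxA hMe mulmx0 mxE expr0n.
move=> h; apply: (le_trans h).
nra.
Qed.
End Det2.
End Det.

Section Gauss.
Variable R : realType.

Lemma mes_tail (s : R) : measurable [set x : R | s < `|x|].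
Proof.
have := @measurable_realfun.normr_measurable R setT measurableT _ (measurable_itv `]s, +oo[).
rewrite setTI; congr measurable; apply/seteqP; split => x /=;
  by rewrite in_itv /= andbT.
Qed.

Lemma pdf_bound (sig s x : R) : 0 < sig -> 0 <= s -> s < `|x| ->
  normal_pdf 0 sig x <= 2 * expR (- (s ^+ 2) / (4 * sig ^+ 2)) * normal_pdf 0 (2 * sig) x.
Proof.
move=> hs s0 hx.
have sn0 : sig != 0 by rewrite gt_eqF.
have s2n0 : 2 * sig != 0 by rewrite mulf_neq0 // pnatr_eq0.
rewrite /normal_pdf (negbTE sn0) (negbTE s2n0) /normal_peak /normal_fun.
have -> : Num.sqrt ((2 * sig) ^+ 2 * pi *+ 2) = 2 * Num.sqrt (sig ^+ 2 * pi *+ 2).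
  have -> : (2 * sig) ^+ 2 * pi *+ 2 = 2 ^+ 2 * (sig ^+ 2 * pi *+ 2).
    by rewrite exprMn -mulrA -mulrnAr.
  by rewrite sqrtrM ?sqr_ge0 // sqrtr_sqr ger0_norm.
set p := Num.sqrt (sig ^+ 2 * pi *+ 2).
have p0 : 0 < p by rewrite sqrtr_gt0 mulrn_wgt0 // mulr_gt0 ?pi_gt0 // exprn_gt0.
rewrite !subr0.
set a1 := - x ^+ 2 / (sig ^+ 2 *+ 2).
set a2 := - s ^+ 2 / (4 * sig ^+ 2).
set a3 := - x ^+ 2 / ((2 * sig) ^+ 2 *+ 2).
have -> : 2 * expR a2 * ((2 * p)^-1 * expR a3) = p^-1 * expR (a2 + a3).
  by rewrite expRD invfM; field; rewrite gt_eqF.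
rewrite ler_pM2l ?invr_gt0 // ler_expR.
have x2 : s ^+ 2 <= x ^+ 2.
  have hn := real_normK (num_real x); nra.
set w := (sig ^+ 2)^-1.
have w0 : 0 < w by rewrite invr_gt0 exprn_gt0.
have e1 : a1 = - (x ^+ 2) * w / 2.
  rewrite /a1 /w; field; exact: sn0.
have e2 : a2 = - (s ^+ 2) * w / 4.
  rewrite /a2 /w; field; exact: sn0.
have e3 : a3 = - (x ^+ 2) * w / 8.
  rewrite /a3 /w; field; exact: sn0.
rewrite e1 e2 e3.
nra.
Qed.

Lemma gauss_tail (sig s : R) : 0 < sig -> 0 <= s ->
  (normal_prob 0 sig [set x : R | (s < `|x|)%R] <= (2 * expR (- (s ^+ 2) / (4 * sig ^+ 2)))%:E)%E.
Proof.
move=> hs s0; set K := 2 * expR _.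
have K0 : 0 <= K by rewrite mulr_ge0 // expR_ge0.
rewrite /normal_prob.
apply: (@le_trans _ _ (\int[lebesgue_measure]_(x in [set x : R | (s < `|x|)%R])
    (K * normal_pdf 0 (2 * sig) x)%:E)%E).
  apply: ge0_le_integral.
  - exact: mes_tail.
  - by move=> x _; rewrite lee_fin normal_pdf_ge0.
  - apply/measurable_EFinP; apply: measurable_funTS; exact: measurable_normal_pdf.
  - apply/measurable_EFinP; apply: measurable_funTS; apply: measurable_funM => //.
    exact: measurable_normal_pdf.
  - by move=> x hx; rewrite lee_fin; apply: pdf_bound.
under eq_integral do rewrite EFinM.
rewrite ge0_integralZl //; last 3 first.
- exact: mes_tail.
- apply/measurable_EFinP; apply: measurable_funTS; exact: measurable_normal_pdf.
- by move=> x _; rewrite lee_fin normal_pdf_ge0.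
have := @probability_le1 _ _ _ (normal_prob 0 (2 * sig)) _ (mes_tail s).
rewrite /normal_prob => h.
rewrite -[leRHS]mule1; apply: lee_wpmul2l => //; by rewrite lee_fin.
Qed.
End Gauss.

Section Lim.
Variable R : realType.

Lemma esup_lt (h : R -> \bar R) (c δ : R) : 0 < δ ->
  (limf_esup h (pinfty_nbhs R) <= c%:E)%E ->
  exists M : R, forall x, M < x -> (h x < (c + δ)%:E)%E.
Proof.
move=> hd hl.
have : (limf_esup h (pinfty_nbhs R) < (c + δ)%:E)%E.
  by apply: (le_lt_trans hl); rewrite lte_fin ltrDl.
move/ereal_inf_lt => [y [V [M [_ hM]] <-] hy].
exists M => x hx; apply: le_lt_trans hy.
by apply: ereal_sup_ubound; exists x => //; apply: hM.
Qed.

Lemma esup_le (h : R -> \bar R) (c : R) :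
  (forall δ, 0 < δ -> exists M : R, forall x, M < x -> (h x <= (c + δ)%:E)%E) ->
  (limf_esup h (pinfty_nbhs R) <= c%:E)%E.
Proof.
move=> H; apply/lee_addgt0Pr => δ hd.
have [M hM] := H δ hd.
have FV : pinfty_nbhs R [set x | M < x] by exists M; split => //; exact: num_real.
apply: (le_trans (ereal_inf_lbound _)); first by exists [set x | M < x].
apply: ge_ereal_sup => _ [x hx <-]; rewrite -EFinD; exact: hM.
Qed.

Lemma eln_lt (p : \bar R) (L c : R) : (0 <= p)%E -> (p < +oo)%E -> 0 < L ->
  (eln p * (L^-1)%:E < c%:E)%E -> (p <= (expR (c * L))%:E)%E.
Proof.
case: p => [r| |] //= r0 _ L0; rewrite lee_fin in r0; rewrite lee_fin.
case: ifP => hr; last first.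
  move=> _; have -> : r = 0 by apply/eqP; rewrite eq_le r0 andbT leNgt hr.
  exact: expR_ge0.
rewrite -EFinM lte_fin => h.
have h2 : ln r < c * L by rewrite -ltr_pdivrMr.
by rewrite -(lnK hr) ler_expR ltW.
Qed.

Lemma eln_le (p : \bar R) (L c : R) : (0 <= p)%E -> 0 < L ->
  (p <= (expR (c * L))%:E)%E -> (eln p * (L^-1)%:E <= c%:E)%E.
Proof.
case: p => [r| |] //= r0 L0; rewrite ?lee_fin.
- move=> h; case: ifP => hr; last first.
    by rewrite gt0_mulNye ?leNye // lte_fin invr_gt0.
  rewrite -EFinM lee_fin ler_pdivrMr //.
  by rewrite -(expRK (c * L)) ler_ln // ?posrE ?expR_gt0.
Qed.

Lemma final_ineq (d δ1 δ L : R) (n : nat) : 0 <= d -> 0 < δ1 -> δ1 <= δ ->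
  1 <= L -> 2 / δ1 <= L ->
  4 * (32 * n%:R ^+ 2 + 8 * n%:R * d) / (δ1 / (4 * (d + 1))) ^+ 2 <= L ->
  expR ((- d + δ1 / 4) * (1 - δ1 / (4 * (d + 1))) * L)
  + n%:R * 2 * expR (- expR (δ1 / (4 * (d + 1)) * L) / (8 * n%:R))
  <= expR ((- d + δ) * L).
Proof.
move=> d0 d10 d1d L1 L2 L3.
set e := δ1 / (4 * (d + 1)).
have e0 : 0 < e by rewrite /e divr_gt0 // mulr_gt0 //; lra.
have he : e * (4 * (d + 1)) = δ1 by rewrite /e divfK // gt_eqF //; lra.
set a1 := (- d + δ1 / 4) * (1 - e).
set a := - d + δ.
have ha : a - a1 >= δ1 / 2 by rewrite /a /a1; nra.
have t1 : expR (a1 * L) * 2 <= expR (a * L).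
  have -> : a * L = a1 * L + (a - a1) * L by ring.
  rewrite expRD ler_pM2l ?expR_gt0 //.
  apply: le_trans (expR_ge1Dx _).
  have : 2 <= δ1 * L.
    have h2 : δ1 * (2 / δ1) = 2 by rewrite mulrC divfK // gt_eqF.
    nra.
  nra.
have t2 : n%:R * 2 * expR (- expR (e * L) / (8 * n%:R)) * 2 <= expR (a * L).
  case: n L3 => [|k] L3.
    rewrite mul0r mul0r mul0r; exact: expR_ge0.
  set N := k.+1%:R : R.
  have N0 : 0 < N by rewrite /N ltr0n.
  have X1 : (e * L) ^+ 2 / 2 <= expR (e * L).
    have := expR_ge1Dxn 1 (ltW (mulr_gt0 e0 (lt_le_trans ltr01 L1))).
    rewrite /= (_ : 2`!%:R = 2 :> R) //; lra.
  have X2 : 8 * N * (4 * N + d * L) <= expR (e * L).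
    apply: le_trans X1.
    have e2 : 0 < e ^+ 2 by rewrite exprn_gt0.
    have L3' : 4 * (32 * N ^+ 2 + 8 * N * d) <= L * e ^+ 2.
      move: L3; set Q := 4 * _.
      have h2 : Q / e ^+ 2 * e ^+ 2 = Q by rewrite divfK // gt_eqF.
      by move=> hL; rewrite -{1}h2 ler_pM2r.
    have h1 : L * (4 * (32 * N ^+ 2 + 8 * N * d)) <= L * (L * e ^+ 2).
      by rewrite ler_pM2l //; lra.
    have h3 : 0 <= (L - 1) * (N * N) by apply: mulr_ge0; [lra | nra].
    have h4 : 0 <= N * d * (L - 1) by apply: mulr_ge0; [nra | lra].
    have -> : (e * L) ^+ 2 / 2 = L * (L * e ^+ 2) / 2 by field.
    nra.
  have X3 : - d * L <= a * L by rewrite ler_pM2r; [rewrite /a; lra | lra].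
  apply: le_trans (_ : expR (- d * L) <= _); last by rewrite ler_expR.
  have : 1 + (expR (e * L) / (8 * N) - d * L) <= expR (expR (e * L) / (8 * N) - d * L).
    exact: expR_ge1Dx.
  rewrite expRD => h.
  have h8 : 4 * N + d * L <= expR (e * L) / (8 * N).
    by rewrite ler_pdivlMr ?mulr_gt0 //; nra.
  set Y := expR (expR (e * L) / (8 * N)) in h.
  have hYZ : Y * expR (- expR (e * L) / (8 * N)) = 1.
    by rewrite /Y -expRD mulNr addrN expR0.
  have Z0 := expR_gt0 (- expR (e * L) / (8 * N)).
  have D0 := expR_gt0 (- d * L).
  rewrite -mulNr in h.
  set Z := expR (- expR (e * L) / (8 * N)) in hYZ Z0 *.
  set D := expR (- d * L) in h D0 *.
  have hh : Z * (1 + 4 * N) <= Z * (Y * D).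
    rewrite ler_pM2l //; move: h; rewrite mulNr; move: h8; set U := expR (e * L) / (8 * N); lra.
  have hZD : Z * (Y * D) = D by rewrite mulrA (mulrC Z) hYZ mul1r.
  rewrite hZD in hh.
  nra.
lra.
Qed.
End Lim.

Lemma in_bigsetU (T : Type) (I : eqType) (r : seq I) (F : I -> set T) (w : T) :
  (exists2 i, i \in r & F i w) -> (\big[setU/set0]_(i <- r) F i) w.
Proof.
elim: r => [[i]|a r IH [i]]; first by rewrite in_nil.
rewrite big_cons in_cons => /orP [/eqP -> h|h1 h2]; first by left.
by right; apply: IH; exists i.
Qed.

Lemma P_bigU (R : realType) (dsp : measure_display) (Omega : measurableType dsp)
  (P : probability Omega R) (I : Type) (r : seq I) (F : I -> set Omega) :
  (forall i, measurable (F i)) ->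
  measurable (\big[setU/set0]_(i <- r) F i) /\
  (P (\big[setU/set0]_(i <- r) F i) <= \sum_(i <- r) P (F i))%E.
Proof.
move=> hF; elim: r => [|a r [IH1 IH2]]; first by rewrite !big_nil measure0.
rewrite !big_cons; split; first exact: measurableU.
apply: (le_trans (measureU2 _ _ _)) => //.
by apply: leeD.
Qed.

Lemma P_tail (R : realType) (dsp : measure_display) (Omega : measurableType dsp)
  (P : probability Omega R) n m (H : Omega -> 'M[R]_(n, m)) (v : Omega -> 'cV[R]_n)
  (rho s : R) (i : 'I_n) :
  0 < rho -> 0 <= s -> gauss_noise_indep P H v rho ->
  (P [set w | (s < `|v w i 0|)%R] <= (2 * expR (- (s ^+ 2) / (4 * rho^-1)))%:E)%E.
Proof.
move=> r0 s0 hind.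
pose B := fun k : 'I_n => if k == i then [set x : R | s < `|x|] else setT.
have := hind (fun _ _ => setT) B (fun _ _ => measurableT) _.
have mB : forall k, measurable (B k).
  by move=> k; rewrite /B; case: eqP => _; [exact: mes_tail | exact: measurableT].
move=> /(_ mB).
have -> : [set w | (forall i j, [set: R] (H w i j)) /\ (forall k, B k (v w k 0))]
          = [set w | s < `|v w i 0|].
  apply/seteqP; split => w /=.
    by move=> [_ hB]; have := hB i; rewrite /B eqxx.
  by move=> hw; split => // k; rewrite /B; case: eqP => [->|].
have -> : [set w | forall i j, [set: R] (H w i j)] = setT by apply/seteqP; split => w.
rewrite probability_setT mul1e (bigD1 i) //= {1}/B eqxx big1 ?mule1; last first.
  by move=> k /negbTE hk; rewrite /B hk; exact: probability_setT.
move=> ->.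
have sig0 : 0 < Num.sqrt (rho^-1) by rewrite sqrtr_gt0 invr_gt0.
apply: le_trans (gauss_tail sig0 s0) _.
by rewrite sqr_sqrtr // invr_ge0 ltW.
Qed.

Unset Implicit Arguments.
Set Strict Implicit.

Theorem lemma2 (R : realType) (dsp : measure_display) (Omega : measurableType dsp)
  (P : probability Omega R) (n m : nat)
  (H : Omega -> 'M[R]_(n, m)) (v : R -> Omega -> 'cV[R]_n)
  (sel : 'M[R]_(m + 1) -> 'M[R]_(m + 1)) (d : R) :
  0 <= d ->
  optimal_selection sel ->
  (forall i j, measurable_fun setT (fun w => H w i j)) ->
  (forall rho, 0 < rho -> forall i, measurable_fun setT (fun w => v rho w i 0)) ->
  (forall rho, 0 < rho -> gauss_noise_indep P H (v rho) rho) ->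
  (forall rho, 0 < rho -> measurable [set w | tau (H w) <= rho^-1]) ->
  (forall rho, 0 < rho ->
     measurable [set w | s_SDR sel (H w) (H w *m ones m + v rho w) != ones m]) ->
  dot_le (fun rho => P [set w | tau (H w) <= rho^-1]) d ->
  dot_le (fun rho => P [set w | s_SDR sel (H w) (H w *m ones m + v rho w) != ones m]) d.
Proof.
move=> d0 hsel _ hvm hind hmT hmE; rewrite /dot_le => hdot.
apply: esup_le => δ hδ.
pose δ1 := if δ <= 1 then δ else 1.
have hδ1 : 0 < δ1 /\ δ1 <= δ /\ δ1 <= 1.
  by rewrite /δ1; case: ifP => h; lra.
case: hδ1 => δ10 [δ1δ δ11].
pose e := δ1 / (4 * (d + 1)).
have e0 : 0 < e by rewrite /e divr_gt0 //; lra.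
have e4 : e <= 1 / 4.
  rewrite /e ler_pdivrMr; last lra.
  nra.
have [M hM] := @esup_lt R _ (- d) (δ1 / 4) (divr_gt0 δ10 (ltr0n _ 4)) hdot.
pose T := 1 + 2 / δ1 + 2 * `|M| + 4 * (32 * n%:R ^+ 2 + 8 * n%:R * d) / e ^+ 2.
have t1 : 0 <= 2 / δ1 by rewrite divr_ge0 //; lra.
have t2 : 0 <= 4 * (32 * n%:R ^+ 2 + 8 * n%:R * d) / e ^+ 2.
  by rewrite divr_ge0 ?sqr_ge0 // mulr_ge0 // addr_ge0 ?mulr_ge0 ?sqr_ge0.
have t3 := normr_ge0 M.
have hT : T = 1 + 2 / δ1 + 2 * `|M| + 4 * (32 * n%:R ^+ 2 + 8 * n%:R * d) / e ^+ 2 by [].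
exists (expR T) => rho hrho /=.
have rho0 : 0 < rho by apply: lt_trans hrho; exact: expR_gt0.
pose L := ln rho.
have LT : T < L.
  by rewrite /L -(expRK T) ltr_ln // posrE expR_gt0.
have L0 : 0 < L by lra.
pose rp := expR ((1 - e) * L).
have rp0 : 0 < rp := expR_gt0 _.
have lnrp : ln rp = (1 - e) * L by rewrite /rp expRK.
have rpM : M < rp.
  apply: (le_lt_trans (ler_norm M)); apply: lt_le_trans (expR_ge1Dx _).
  nra.
have hf := hM rp rpM; rewrite /= lnrp in hf.
set T1 := [set w | tau (H w) <= rp^-1].
have mT1 : measurable T1 by exact: hmT.
have hPf : (P T1 <= (expR ((- d + δ1 / 4) * ((1 - e) * L)))%:E)%E.
  apply: (eln_lt _ _ _ hf).
  - exact: measure_ge0.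
  - by apply: (le_lt_trans (probability_le1 _ mT1)); exact: ltey.
  - by apply: mulr_gt0 => //; lra.
pose c := rp^-1 / (2 * n%:R).
have c0 : 0 <= c by rewrite /c divr_ge0 // ?invr_ge0 ?ltW // mulr_ge0.
have hnc : n%:R * c <= rp^-1 / 2.
  rewrite /c; have [->|nz] := eqVneq (n%:R : R) 0.
    by rewrite mul0r divr_ge0 // invr_ge0 ltW.
  rewrite le_eqVlt; apply/orP; left; apply/eqP; field.
  by rewrite nz andbT; exact: lt0r_neq0.
pose s := Num.sqrt c.
have s0 : 0 <= s := sqrtr_ge0 c.
have s2 : s ^+ 2 = c by rewrite /s sqr_sqrtr.
pose T2 := fun i : 'I_n => [set w | (s < `|v rho w i 0|)%R].
have mT2 : forall i, measurable (T2 i).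
  move=> i; have := hvm rho rho0 i measurableT _ (mes_tail s).
  by rewrite setTI.
set E := [set w | s_SDR sel (H w) (H w *m ones m + v rho w) != ones m].
have mE : measurable E by exact: hmE.
set U := \big[setU/set0]_(i <- index_enum 'I_n) T2 i.
have [mU hPU] := P_bigU P (index_enum 'I_n) mT2.
have hincl : E `<=` T1 `|` U.
  move=> w herr.
  have hd := det_main hsel herr.
  case: (leP (tau (H w)) rp^-1) => h; first by left.
  right; apply: in_bigsetU; apply: contrapT => hno.
  have hv : forall i : 'I_n, v rho w i 0 ^+ 2 <= c.
    move=> i; have hi : ~ (s < `|v rho w i 0|).
      by move=> hi; apply: hno; exists i => //; rewrite mem_index_enum.
    move/negP: hi; rewrite -leNgt => hi.
    have hn := real_normK (num_real (v rho w i 0)); have := normr_ge0 (v rho w i 0); rewrite -s2; nra.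
  have : \sum_(i < n) v rho w i 0 ^+ 2 <= n%:R * c.
    apply: le_trans (_ : \sum_(i < n) c <= _).
      by apply: ler_sum => i _; exact: hv.
    by rewrite sumr_const card_ord mulr_natl.
  move=> hs; have : tau (H w) <= rp^-1 by lra.
  by rewrite leNgt h.
have hPE : (P E <= (expR ((- d + δ1 / 4) * ((1 - e) * L))
                   + n%:R * (2 * expR (- (s ^+ 2) / (4 * rho^-1))))%:E)%E.
  apply: le_trans (le_measure _ _ _ hincl) _; rewrite ?inE //; first exact: measurableU.
  apply: le_trans (measureU2 _ _ _) _ => //.
  rewrite EFinD; apply: leeD => //.
  apply: le_trans hPU _.
  have -> : ((n%:R * (2 * expR (- (s ^+ 2) / (4 * rho^-1))))%:E
     = \sum_(i < n) (2 * expR (- (s ^+ 2) / (4 * rho^-1)))%:E)%E.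
    by rewrite sumEFin sumr_const card_ord mulr_natl.
  by apply: lee_sum => i _; exact: (P_tail i rho0 s0 (hind rho rho0)).
apply: (eln_le _ L0) => //.
apply: le_trans hPE _; rewrite lee_fin.
have L1 : 1 <= L by lra.
have L2 : 2 / δ1 <= L by lra.
have L3 : 4 * (32 * n%:R ^+ 2 + 8 * n%:R * d) / e ^+ 2 <= L by lra.
have := @final_ineq R d δ1 δ L n d0 δ10 δ1δ L1 L2 L3.
have eq1 : expR ((- d + δ1 / 4) * (1 - e) * L) = expR ((- d + δ1 / 4) * ((1 - e) * L)).
  by rewrite mulrA.
have eq2 : n%:R * 2 * expR (- expR (e * L) / (8 * n%:R))
           = n%:R * (2 * expR (- (s ^+ 2) / (4 * rho^-1))).
  rewrite mulrA; have [->|nz] := eqVneq (n%:R : R) 0.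
    by rewrite !mul0r.
  congr (_ * expR _).
  rewrite s2 /c.
  have -> : expR (e * L) = rho * rp^-1.
    rewrite /rp -expRN; transitivity (expR L * expR (- ((1 - e) * L))).
      by rewrite -expRD; congr expR; ring.
    by rewrite /L lnK.
  field; by rewrite nz !lt0r_neq0.
by rewrite -/e eq1 eq2.
Qed.
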